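(* Let $\alpha,\beta,\gamma\in\mathbb{Z}[i]$ satisfy $\alpha^2+\beta^2+\gamma^2=0$, $\alpha\beta\gamma\neq 0$, and $\gcd(\alpha,\beta)\in U$. Then, after multiplying each of $\alpha,\beta,\gamma$ by a suitable unit and permuting the three coordinates, one obtains a triple $(X,Y,Z)$ satisfying $X^2+Y^2=Z^2$ with $X,Z\in O^I$, $Y=(1+i)^{2+a_1}p_2^{a_2}\cdots p_m^{a_m}$ (integers $a_j\ge 0$, $p_2,\dots,p_m$ distinct Gaussian primes lying in $O^I$), $\gcd(X,Y)\in U$ and $XYZ\neq 0$. Conversely, if $(X,Y,Z)\in\mathbb{Z}[i]^3$ satisfies $X^2+Y^2=Z^2$, $\gcd(X,Y)\in U$ and $XYZ\neq 0$, then $(X,Y,iZ)$ satisfies $X^2+Y^2+(iZ)^2=0$ with the same conditions.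
   Context: $\mathbb{Z}[i]$ is the ring of Gaussian integers, $U=\{1,-1,i,-i\}$ its unit group; for $\alpha\in\mathbb{Z}[i]$, $R(\alpha)$ and $I(\alpha)$ denote its real and imaginary parts. $\gcd(x,y)\in U$ means $x,y$ have no common non-unit divisor. $O=\{\alpha\in\mathbb{Z}[i]: R(\alpha)+I(\alpha)\equiv 1 \pmod 2\}$ is the set of odd Gaussian integers (those not divisible by $1+i$), and $O^I=\{\alpha\in O: R(\alpha)\equiv 1\pmod 4\}$. *)

(* Defs.v *)
From HB Require Import structures.
From mathcomp Require Import all_boot all_order all_algebra.
From mathcomp Require Import complex.
Set Implicit Arguments. Unset Strict Implicit. Unset Printing Implicit Defensive.
Import Order.TTheory GRing.Theory Num.Theory.
Local Open Scope ring_scope.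

Definition gauss := complex int.
HB.instance Definition _ := GRing.Zmodule.on gauss.

Lemma gauss_mul1 : left_id (Complex (1 : int) 0) (@mulc int).
Proof. by move=> [a b] /=; rewrite !mul1r !mul0r subr0 addr0. Qed.

Lemma gauss_mulDl : left_distributive (@mulc int) (@addc int).
Proof.
move=> [a b] [c d] [e f] /=; rewrite !mulrDl !opprD -!addrA.
by congr (Complex (_ + _) (_ + _)); rewrite addrCA.
Qed.

Lemma gauss_nz1 : Complex (1 : int) 0 != Complex 0 0.
Proof. by []. Qed.

HB.instance Definition _ := GRing.Zmodule_isComNzRing.Build gauss
  (@mulcA int) (@mulcC int) gauss_mul1 gauss_mulDl gauss_nz1.

Definition gi : gauss := Complex 0 1.

Definition gunit (x : gauss) : bool := x \in [:: 1; -1; gi; - gi].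

Definition gdvd (d x : gauss) : Prop := exists q : gauss, x = q * d.

(* gcd(x, y) \in U : x and y have no common non-unit divisor. *)
Definition gcoprime (x y : gauss) : Prop :=
  forall d : gauss, gdvd d x -> gdvd d y -> gunit d.

Definition gprime (p : gauss) : Prop :=
  p != 0 /\ ~~ gunit p /\
  forall a b : gauss, gdvd p (a * b) -> gdvd p a \/ gdvd p b.

Definition godd (a : gauss) : bool := ((real_closed.complex.Re a + real_closed.complex.Im a) %% 2)%Z == 1.

Definition goddI (a : gauss) : bool := godd a && ((real_closed.complex.Re a %% 4)%Z == 1).

(* Main.v *)
Require Import Defs.
From HB Require Import structures.
From mathcomp Require Import all_boot all_order all_algebra.
From mathcomp Require Import complex.
From mathcomp Require Import zify ring lra.
From Stdlib Require Import Classical.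
Import Order.TTheory GRing.Theory Num.Theory.
Local Open Scope ring_scope.
Local Notation Re := real_closed.complex.Re.
Local Notation Im := real_closed.complex.Im.

Lemma ReD (x y : gauss) : Re (x + y) = Re x + Re y. Proof. by case: x; case: y. Qed.
Lemma ImD (x y : gauss) : Im (x + y) = Im x + Im y. Proof. by case: x; case: y. Qed.
Lemma ReN (x : gauss) : Re (- x) = - Re x. Proof. by case: x. Qed.
Lemma ImN (x : gauss) : Im (- x) = - Im x. Proof. by case: x. Qed.
Lemma ReB (x y : gauss) : Re (x - y) = Re x - Re y. Proof. by rewrite ReD ReN. Qed.
Lemma ImB (x y : gauss) : Im (x - y) = Im x - Im y. Proof. by rewrite ImD ImN. Qed.
Lemma ReM (x y : gauss) : Re (x * y) = Re x * Re y - Im x * Im y. Proof. by case: x; case: y. Qed.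
Lemma ImM (x y : gauss) : Im (x * y) = Re x * Im y + Im x * Re y. Proof. by case: x; case: y. Qed.
Lemma Re1 : Re (1 : gauss) = 1. Proof. by []. Qed.
Lemma Im1 : Im (1 : gauss) = 0. Proof. by []. Qed.
Lemma Re0 : Re (0 : gauss) = 0. Proof. by []. Qed.
Lemma Im0 : Im (0 : gauss) = 0. Proof. by []. Qed.
Lemma Regi : Re gi = 0. Proof. by []. Qed.
Lemma Imgi : Im gi = 1. Proof. by []. Qed.
Lemma gaussE (x : gauss) : x = Complex (Re x) (Im x). Proof. by case: x. Qed.
Lemma gauss_eq (x y : gauss) : Re x = Re y -> Im x = Im y -> x = y.
Proof. by case: x; case: y => /= ? ? ? ? -> ->. Qed.

Definition N (x : gauss) : int := Re x * Re x + Im x * Im x.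

Lemma NM x y : N (x * y) = N x * N y.
Proof. rewrite /N ReM ImM; ring. Qed.
Lemma N_ge0 x : 0 <= N x. Proof. rewrite /N; nia. Qed.
Lemma N_eq0 x : N x = 0 -> x = 0.
Proof. rewrite /N => h; apply: gauss_eq; rewrite ?Re0 ?Im0; nia. Qed.
Lemma N0 : N 0 = 0. Proof. by []. Qed.

Lemma gunitP x : gunit x <-> N x = 1.
Proof.
split.
  by rewrite /gunit !inE => /or4P [] /eqP ->.
rewrite /N => h.
have : (Re x = 1 /\ Im x = 0) \/ (Re x = -1 /\ Im x = 0) \/
       (Re x = 0 /\ Im x = 1) \/ (Re x = 0 /\ Im x = -1) by nia.
by rewrite [x]gaussE => -[[-> ->]|[[-> ->]|[[-> ->]|[-> ->]]]].
Qed.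

Lemma unitM a b : gunit a -> gunit b -> gunit (a * b).
Proof. by move=> /gunitP ha /gunitP hb; apply/gunitP; rewrite NM ha hb. Qed.
Lemma unitML a b : gunit (a * b) -> gunit a.
Proof.
move/gunitP; rewrite NM => h; apply/gunitP.
have ha := N_ge0 a; have hb := N_ge0 b.
have hb1 : N b != 0 by apply/eqP => e; move: h; rewrite e mulr0.
have ha1 : N a != 0 by apply/eqP => e; move: h; rewrite e mul0r.
nia.
Qed.
Lemma unitMR a b : gunit (a * b) -> gunit b.
Proof. by rewrite mulrC; apply: unitML. Qed.
Lemma unit_inv u : gunit u -> exists2 v, gunit v & v * u = 1.
Proof.
rewrite /gunit !inE => /or4P [] /eqP ->.
- by exists 1.
- by exists (-1).
- by exists (- gi).
- by exists gi.
Qed.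
Lemma unit_sq u : gunit u -> u ^+ 2 = 1 \/ u ^+ 2 = -1.
Proof. by rewrite /gunit !inE => /or4P [] /eqP ->; [left|left|right|right]. Qed.
Lemma unit_neq0 u : gunit u -> u != 0.
Proof. by move/gunitP => h; apply/eqP => e; move: h; rewrite e. Qed.

Lemma Nind (P : gauss -> Prop) :
  (forall x, (forall y, N y < N x -> P y) -> P x) -> forall x, P x.
Proof.
move=> IH.
suff H : forall n : nat, forall x, N x < n%:Z -> P x.
  move=> x; apply: (H (absz (N x)).+1); have := N_ge0 x; lia.
elim=> [|n IHn] x hx; first by have := N_ge0 x; lia.
apply: IH => y hy; apply: IHn; lia.
Qed.

Lemma ediv a b : b != 0 -> exists q, N (a - q * b) < N b.
Proof.
move=> hb.
have n0 : 0 < N b.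
  have : N b != 0 by apply/eqP => /N_eq0 e; rewrite e eqxx in hb.
  have := N_ge0 b; lia.
set n := N b in n0 *.
set s := Re a * Re b + Im a * Im b.
set t := Im a * Re b - Re a * Im b.
have e1 := divz_eq (2 * s + n) (2 * n).
have e2 := divz_eq (2 * t + n) (2 * n).
have d0 : 2 * n != 0 by lia.
have r1 := modz_ge0 (2 * s + n) d0.
have r2 := modz_ge0 (2 * t + n) d0.
have s1 := ltz_pmod (2 * s + n) (_ : 0 < 2 * n).
have s2 := ltz_pmod (2 * t + n) (_ : 0 < 2 * n).
move: e1 e2 r1 r2 s1 s2.
set q1 := ((2 * s + n) %/ (2 * n))%Z. set q2 := ((2 * t + n) %/ (2 * n))%Z.
set m1 := ((2 * s + n) %% (2 * n))%Z. set m2 := ((2 * t + n) %% (2 * n))%Z.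
move=> e1 e2 r1 r2 s1 s2.
exists ((Complex q1 q2 : gauss)).
have key : N (a - (Complex q1 q2 : gauss) * b) * n = (s - q1 * n) ^+ 2 + (t - q2 * n) ^+ 2.
  rewrite /n /N /s /t ReB ImB ReM ImM /=; ring.
have hX : 4 * (s - q1 * n) ^+ 2 <= n * n.
  have h1 : 0 <= n + 2 * (s - q1 * n) by lia.
  have h2 : 0 <= n - 2 * (s - q1 * n) by lia.
  have := mulr_ge0 h1 h2.
  have -> : (n + 2 * (s - q1 * n)) * (n - 2 * (s - q1 * n)) = n * n - 4 * (s - q1 * n) ^+ 2 by ring.
  lia.
have hY : 4 * (t - q2 * n) ^+ 2 <= n * n.
  have h1 : 0 <= n + 2 * (t - q2 * n) by lia.
  have h2 : 0 <= n - 2 * (t - q2 * n) by lia.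
  have := mulr_ge0 h1 h2.
  have -> : (n + 2 * (t - q2 * n)) * (n - 2 * (t - q2 * n)) = n * n - 4 * (t - q2 * n) ^+ 2 by ring.
  lia.
have hN := N_ge0 (a - (Complex q1 q2 : gauss) * b).
move: key hX hY hN; set M := N _ => key hX hY hN.
have h4 : 2 * M * n <= n * n.
  have : 4 * (M * n) <= 2 * (n * n) by rewrite key; lia.
  lia.
have : n * (2 * M - n) <= 0 by lia.
move=> h5.
have : 2 * M - n <= 0.
  by rewrite -(pmulr_rle0 _ n0).
lia.
Qed.

Lemma dvd_refl x : gdvd x x. Proof. by exists 1; rewrite mul1r. Qed.
Lemma dvd0 x : gdvd x 0. Proof. by exists 0; rewrite mul0r. Qed.
Lemma dvd_trans a b c : gdvd a b -> gdvd b c -> gdvd a c.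
Proof. by move=> [q ->] [r ->]; exists (r * q); rewrite mulrA. Qed.
Lemma dvd_mull a b c : gdvd a b -> gdvd a (c * b).
Proof. by move=> [q ->]; exists (c * q); rewrite mulrA. Qed.
Lemma dvd_mulr a b c : gdvd a b -> gdvd a (b * c).
Proof. by rewrite mulrC; apply: dvd_mull. Qed.
Lemma dvd_add a b c : gdvd a b -> gdvd a c -> gdvd a (b + c).
Proof. by move=> [q ->] [r ->]; exists (q + r); rewrite mulrDl. Qed.
Lemma dvd_opp a b : gdvd a b -> gdvd a (- b).
Proof. by move=> [q ->]; exists (- q); rewrite mulNr. Qed.
Lemma dvd_unitl a u b : gunit u -> gdvd a (u * b) -> gdvd a b.
Proof.
move=> /unit_inv [v _ hv] h.
by have := @dvd_mull _ _ v h; rewrite mulrA hv mul1r.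
Qed.
Lemma dvd_neq0 d x : x != 0 -> gdvd d x -> d != 0.
Proof. by move=> hx [q e]; apply/eqP => e'; rewrite e e' mulr0 eqxx in hx. Qed.

Lemma bezout a b : exists d x y, d = x * a + y * b /\ gdvd d a /\ gdvd d b.
Proof.
elim/Nind: b a => b IH a.
have [->|hb] := eqVneq b 0.
  by exists a, 1, 0; rewrite mul1r mul0r addr0; split=> //; split; [apply: dvd_refl|apply: dvd0].
have [q hq] := ediv a b hb.
have [d [x [y [e [h1 h2]]]]] := IH _ hq b.
exists d, y, (x - y * q); split; first by rewrite e; ring.
split=> //.
have -> : a = (a - q * b) + q * b by ring.
by apply: dvd_add=> //; apply: dvd_mull.
Qed.

Definition irred (p : gauss) : Prop :=
  p != 0 /\ ~~ gunit p /\ forall x y, p = x * y -> gunit x \/ gunit y.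

Lemma irred_prime p : irred p -> gprime p.
Proof.
move=> [p0 [pu pirr]]; split=> //; split=> // a b hab.
have [d [x [y [e [[c hc] hda]]]]] := bezout p a.
case: (pirr _ _ hc) => [cu|du].
  left; move/unit_inv: cu => [c' _ hc'].
  apply: dvd_trans hda; exists c'; by rewrite hc mulrA hc' mul1r.
right; move/unit_inv: du => [d' _ hd'].
have eb : b = d' * (x * b * p + y * (a * b)) by rewrite -[LHS]mul1r -hd' e; ring.
rewrite eb; apply: dvd_mull; apply: dvd_add; first by apply: dvd_mull; apply: dvd_refl.
by apply: dvd_mull.
Qed.

Lemma irred_factor x : x != 0 -> ~~ gunit x -> exists p z, irred p /\ x = p * z.
Proof.
elim/Nind: x => x IH x0 xu.
case: (classic (irred x)) => [hi|hni]; first by exists x, 1; rewrite mulr1.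
have [y [z [e [yu zu]]]] : exists y z, x = y * z /\ ~~ gunit y /\ ~~ gunit z.
  apply: NNPP => hne; apply: hni; split=> //; split=> // y z e.
  case: (boolP (gunit y)) => hy; first by left.
  case: (boolP (gunit z)) => hz; first by right.
  by exfalso; apply: hne; exists y, z.
have y0 : y != 0 by apply/eqP=> y0; rewrite e y0 mul0r eqxx in x0.
have z0 : z != 0 by apply/eqP=> z0; rewrite e z0 mulr0 eqxx in x0.
have hNy : N y < N x.
  rewrite e NM.
  have h1 : N z != 1 by apply/eqP => h; move: zu; rewrite (proj2 (gunitP z) h).
  have h2 : N z != 0 by apply/eqP => /N_eq0 h; rewrite h eqxx in z0.
  have h3 : N y != 0 by apply/eqP => /N_eq0 h; rewrite h eqxx in y0.
  have := N_ge0 y; have := N_ge0 z; nia.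
have [p [w [pi ew]]] := IH y hNy y0 yu.
by exists p, (w * z); split=> //; rewrite e ew mulrA.
Qed.

Lemma even_dvd x : ((Re x + Im x) %% 2 = 0)%Z -> gdvd (1 + gi) x.
Proof.
move=> h; have e := divz_eq (Re x + Im x) 2.
exists (Complex ((Re x + Im x) %/ 2)%Z (Im x - ((Re x + Im x) %/ 2)%Z)).
apply: gauss_eq; rewrite ?ReM ?ImM ?ReD ?ImD ?Re1 ?Im1 ?Regi ?Imgi /=; lia.
Qed.

Lemma dvd_even x : gdvd (1 + gi) x -> ((Re x + Im x) %% 2 = 0)%Z.
Proof. move=> [q ->]; rewrite ImM ReM ReD ImD Re1 Im1 Regi Imgi; lia. Qed.

Lemma nodd_dvd x : ~~ godd x -> gdvd (1 + gi) x.
Proof. rewrite /godd => h; apply: even_dvd; lia. Qed.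

Lemma odd_ndvd x : godd x -> ~ gdvd (1 + gi) x.
Proof. rewrite /godd => h /dvd_even; lia. Qed.

Lemma unit1i : ~~ gunit (1 + gi).
Proof. by []. Qed.

Lemma normalize x : godd x -> exists2 u, gunit u & goddI (u * x).
Proof.
rewrite /godd => h.
have [h1|h1] : ((Re x %% 4 = 1) \/ (Re x %% 4 = 3) \/ (Im x %% 4 = 1) \/ (Im x %% 4 = 3))%Z by lia.
  by exists 1 => //; rewrite mul1r /goddI /godd; apply/andP; split; apply/eqP; lia.
case: h1 => [h1|[h1|h1]].
- exists (-1) => //; rewrite /goddI /godd ReM ImM ReN ImN Re1 Im1; apply/andP; split; apply/eqP; lia.
- exists (- gi) => //; rewrite /goddI /godd ReM ImM ReN ImN Regi Imgi; apply/andP; split; apply/eqP; lia.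
- exists gi => //; rewrite /goddI /godd ReM ImM Regi Imgi; apply/andP; split; apply/eqP; lia.
Qed.

Lemma oddI_sq x : goddI x -> exists t1 t2, Re (x ^+ 2) = 1 + 4 * t1 /\ Im (x ^+ 2) = 4 * t2.
Proof.
rewrite /goddI /godd => /andP [/eqP h1 /eqP h2].
have ea := divz_eq (Re x) 4; have eb := divz_eq (Im x) 2.
have ea' : Re x = (Re x %/ 4)%Z * 4 + 1 by lia.
have eb' : Im x = (Im x %/ 2)%Z * 2 by lia.
move: ea' eb'; set k := (Re x %/ 4)%Z; set l := (Im x %/ 2)%Z => ea' eb'.
exists (4 * k * k + 2 * k - l * l), (l * (4 * k + 1)).
by rewrite expr2 ReM ImM ea' eb'; split; ring.
Qed.

Lemma gprime_unit p e : gprime p -> gunit e -> gprime (e * p).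
Proof.
move=> [p0 [pu pp]] eu; split.
  apply/eqP => /(congr1 N); rewrite NM N0 (proj1 (gunitP e) eu) mul1r => /N_eq0 h.
  by rewrite h eqxx in p0.
split.
  by apply/negP => /unitMR h; rewrite h in pu.
move=> a b h.
have h' : gdvd p (a * b) by apply: dvd_trans h; exists e.
have [v _ hv] := unit_inv e eu.
have tr : forall c, gdvd p c -> gdvd (e * p) c.
  by move=> c [q ->]; exists (q * v); rewrite -mulrA (mulrA v) hv mul1r.
by case: (pp _ _ h') => [ha|hb]; [left|right]; apply: tr.
Qed.

Fixpoint bump (p : gauss) (s : seq (gauss * nat)) : seq (gauss * nat) :=
  match s with
  | [::] => [::]
  | pa :: s' => if pa.1 == p then (pa.1, pa.2.+1) :: s' else pa :: bump p s'
  end.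

Lemma bump_fst p s : map fst (bump p s) = map fst s.
Proof. by elim: s => //= pa s IH; case: ifP => //= _; rewrite IH. Qed.

Lemma bump_mem p s pa : pa \in bump p s -> exists2 pb, pb \in s & pa.1 = pb.1.
Proof.
elim: s => //= pb s IH; case: ifP => _; rewrite inE => /orP [/eqP ->|h].
- by exists pb => //; rewrite inE eqxx.
- by exists pa => //; rewrite inE h orbT.
- by exists pb => //; rewrite inE eqxx.
- by have [pc hc e] := IH h; exists pc => //; rewrite inE hc orbT.
Qed.

Definition gprod (s : seq (gauss * nat)) : gauss := \prod_(pa <- s) pa.1 ^+ pa.2.

Lemma bump_prod p s : p \in map fst s -> gprod (bump p s) = p * gprod s.
Proof.
rewrite /gprod; elim: s => //= pb s IH; rewrite inE.
case: ifP => [/eqP <- _|hne /orP [/eqP e|h]].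
- by rewrite !big_cons /= exprS mulrA.
- by rewrite e eqxx in hne.
- by rewrite !big_cons IH // mulrCA.
Qed.

Lemma factor x : x != 0 -> exists u k s,
  [/\ gunit u, uniq (map fst s),
      (forall pa, pa \in s -> gprime pa.1 /\ goddI pa.1) &
      x = u * (1 + gi) ^+ k * gprod s].
Proof.
elim/Nind: x => x IH x0.
case: (boolP (gunit x)) => xu.
  by exists x, 0%N, [::]; split=> //; rewrite /gprod big_nil !mulr1.
have [p [z [pi e]]] := irred_factor x x0 xu.
have z0 : z != 0 by apply/eqP=> z0; rewrite e z0 mulr0 eqxx in x0.
have hNz : N z < N x.
  rewrite e NM.
  case: pi => p0 [pu _].
  have h1 : N p != 1 by apply/eqP => h; move: pu; rewrite (proj2 (gunitP p) h).
  have h2 : N p != 0 by apply/eqP => /N_eq0 h; rewrite h eqxx in p0.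
  have h3 : N z != 0 by apply/eqP => /N_eq0 h; rewrite h eqxx in z0.
  have := N_ge0 p; have := N_ge0 z; nia.
have [u [k [s [uu us sp ez]]]] := IH z hNz z0.
case: (boolP (godd p)) => po; last first.
  have [y ey] := nodd_dvd p po.
  have yu : gunit y.
    case: pi => _ [_ pirr]; by case: (pirr _ _ ey).
  exists (y * u), k.+1, s; split=> //; first exact: unitM.
  by rewrite e ez ey exprS; ring.
have [v vu hv] := normalize p po.
have [w wu hw] := unit_inv v vu.
have pp : gprime (v * p) := gprime_unit p v (irred_prime p pi) vu.
have ep : p = w * (v * p) by rewrite mulrA hw mul1r.
case: (boolP (v * p \in map fst s)) => hin.
  exists (w * u), k, (bump (v * p) s); split.
  - exact: unitM.
  - by rewrite bump_fst.
  - move=> pa /bump_mem [pb hb ->]; exact: sp.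
  - by rewrite bump_prod // e ez {1}ep; ring.
exists (w * u), k, ((v * p, 1%N) :: s); split.
- exact: unitM.
- by rewrite /= hin.
- move=> pa; rewrite inE => /orP [/eqP -> //|]; exact: sp.
- by rewrite /gprod big_cons /= -/(gprod s) e ez {1}ep expr1; ring.
Qed.

Lemma pm1 (u : gauss) : gunit u -> u ^+ 2 \in [:: 1; -1].
Proof. by move/unit_sq; rewrite !inE => -[->|->]; rewrite eqxx ?orbT. Qed.

Lemma mod4_odd (PX PZ PW a b c : gauss) t1 t2 t3 t4 t5 t6 :
  a \in [:: 1; -1] -> b \in [:: 1; -1] -> c \in [:: 1; -1] ->
  Re PX = 1 + 4 * t1 -> Im PX = 4 * t2 ->
  Re PZ = 1 + 4 * t3 -> Im PZ = 4 * t4 ->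
  Re PW = 1 + 4 * t5 -> Im PW = 4 * t6 ->
  a * PX + b * PZ + (Complex 0 2 : gauss) * (c * PW) = 0 -> False.
Proof.
rewrite !inE => ha hb hc h1 h2 h3 h4 h5 h6.
move=> /(congr1 (@Im int)); rewrite !ImD !ImM !ReM /= ?Im0.
by case/orP: ha => /eqP ->; case/orP: hb => /eqP ->; case/orP: hc => /eqP ->;
  rewrite ?ReN ?ImN Re1 Im1; lia.
Qed.

Lemma mod4_even (PX PZ PE a b : gauss) t1 t2 t3 t4 :
  a \in [:: 1; -1] -> b \in [:: 1; -1] ->
  Re PX = 1 + 4 * t1 -> Im PX = 4 * t2 ->
  Re PZ = 1 + 4 * t3 -> Im PZ = 4 * t4 ->
  a * PX + b * PZ + (Complex (-4) 0 : gauss) * PE = 0 -> b = - a.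
Proof.
rewrite !inE => ha hb h1 h2 h3 h4.
move=> /(congr1 (@Re int)); rewrite !ReD !ReM /= ?Re0.
by case/orP: ha => /eqP ->; case/orP: hb => /eqP ->;
  rewrite ?ReN ?ImN Re1 Im1 ?opprK //; lia.
Qed.

Lemma sq_unit u y : gunit u -> y ^+ 2 = u ^+ 2 * (u * y) ^+ 2.
Proof. by move=> hu; rewrite exprMn mulrA; case: (unit_sq u hu) => ->; ring. Qed.

Lemma pow1i2 : (1 + gi) ^+ 2 = (Complex 0 2 : gauss). Proof. by []. Qed.
Lemma pow1i4 : (1 + gi) ^+ 4 = (Complex (-4) 0 : gauss). Proof. by []. Qed.

Lemma mulg_neq0 (x y : gauss) : x != 0 -> y != 0 -> x * y != 0.
Proof.
move=> hx hy; apply/eqP => /(congr1 N); rewrite NM N0 => /eqP; rewrite mulf_eq0.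
by case/orP => /eqP /N_eq0 e; [rewrite e eqxx in hx | rewrite e eqxx in hy].
Qed.

Lemma godd_neq0 x : godd x -> x != 0.
Proof. by move=> h; apply/eqP => e; rewrite e in h. Qed.

Lemma unit_mul_neq0 u x : gunit u -> x != 0 -> u * x != 0.
Proof. by move=> /unit_neq0; apply: mulg_neq0. Qed.

Lemma unitX u n : gunit u -> gunit (u ^+ n).
Proof. by move=> hu; elim: n => [|n IH]; [|rewrite exprS; apply: unitM]. Qed.

Lemma core (A B E : gauss) :
  A ^+ 2 + B ^+ 2 + E ^+ 2 = 0 -> godd A -> godd B -> ~~ godd E -> E != 0 ->
  gcoprime A E -> gcoprime B E ->
  exists (uA uB uE X Z : gauss),
   [/\ gunit uA, gunit uB, gunit uE &
       (X = uA * A /\ Z = uB * B) \/ (X = uB * B /\ Z = uA * A)] /\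
   [/\ X ^+ 2 + (uE * E) ^+ 2 = Z ^+ 2, goddI X, goddI Z,
       (exists (a1 : nat) (s : seq (gauss * nat)),
          [/\ uniq (map fst s),
              (forall pa, pa \in s -> gprime pa.1 /\ goddI pa.1) &
              uE * E = (1 + gi) ^+ (2 + a1) * \prod_(pa <- s) pa.1 ^+ pa.2]) &
       gcoprime X (uE * E) /\ X * (uE * E) * Z != 0].
Proof.
move=> h oA oB eE E0 cAE cBE.
have [uA uAu hA] := normalize A oA.
have [uB uBu hB] := normalize B oB.
have [t1 [t2 [h1 h2]]] := oddI_sq _ hA.
have [t3 [t4 [h3 h4]]] := oddI_sq _ hB.
have h' : uA ^+ 2 * (uA * A) ^+ 2 + uB ^+ 2 * (uB * B) ^+ 2 + E ^+ 2 = 0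
  by rewrite -(sq_unit uA A uAu) -(sq_unit uB B uBu).
have [E1 eE1] := nodd_dvd E eE.
have eE1' : ~~ godd E1.
  apply/negP => oE1.
  have [v vu hW] := normalize E1 oE1.
  have [t5 [t6 [h5 h6]]] := oddI_sq _ hW.
  apply: (mod4_odd _ _ _ _ _ _ _ _ _ _ _ _ (pm1 uA uAu) (pm1 uB uBu) (pm1 v vu) h1 h2 h3 h4 h5 h6).
  have -> : (Complex 0 2 : gauss) * (v ^+ 2 * (v * E1) ^+ 2) = E ^+ 2.
    by rewrite -(sq_unit v E1 vu) eE1 exprMn pow1i2 mulrC.
  exact: h'.
have [E2 eE2] := nodd_dvd E1 eE1'.
have hBA : uB ^+ 2 = - uA ^+ 2.
  apply: (mod4_even _ _ (E2 ^+ 2) _ _ _ _ _ _ (pm1 uA uAu) (pm1 uB uBu) h1 h2 h3 h4).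
  have -> : (Complex (-4) 0 : gauss) * E2 ^+ 2 = E ^+ 2.
    by rewrite eE1 eE2 -pow1i4; ring.
  exact: h'.
have E20 : E2 != 0.
  by apply/eqP => e0; move: E0; rewrite eE1 eE2 e0 !mul0r eqxx.
have [e [k [s [eu us sp es]]]] := factor E2 E20.
have e4 : e ^+ 3 * e = 1.
  rewrite -exprSr (exprM e 2 2).
  by case: (unit_sq e eu) => ->; [rewrite expr1n | rewrite sqrrN expr1n].
have hY : e ^+ 3 * E = (1 + gi) ^+ (2 + k) * \prod_(pa <- s) pa.1 ^+ pa.2.
  rewrite eE1 eE2 es /gprod exprD.
  transitivity ((e ^+ 3 * e) * ((1 + gi) ^+ 2 * (1 + gi) ^+ k * \prod_(pa <- s) pa.1 ^+ pa.2)); first ring.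
  by rewrite e4 mul1r.
have hYf : exists (a1 : nat) (s : seq (gauss * nat)),
          [/\ uniq (map fst s),
              (forall pa, pa \in s -> gprime pa.1 /\ goddI pa.1) &
              e ^+ 3 * E = (1 + gi) ^+ (2 + a1) * \prod_(pa <- s) pa.1 ^+ pa.2].
  by exists k, s.
have eu3 : gunit (e ^+ 3) by apply: unitX.
have cop : forall u Y0, gunit u -> gcoprime Y0 E -> gcoprime (u * Y0) (e ^+ 3 * E).
  move=> u Y0 uu cY d d1 d2; apply: cY; [exact: dvd_unitl d1 | exact: dvd_unitl d2].
have nzA : uA * A != 0 by apply: unit_mul_neq0 => //; apply: godd_neq0.
have nzB : uB * B != 0 by apply: unit_mul_neq0 => //; apply: godd_neq0.
have nzE : e ^+ 3 * E != 0 by apply: unit_mul_neq0.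
have hB2 : B ^+ 2 = - (A ^+ 2 + E ^+ 2).
  by apply/eqP; rewrite -subr_eq0 opprK -h; apply/eqP; ring.
have hA2 : A ^+ 2 = - (B ^+ 2 + E ^+ 2).
  by apply/eqP; rewrite -subr_eq0 opprK -h; apply/eqP; ring.
have e6 : (e ^+ 3) ^+ 2 = (e ^+ 2) ^+ 3 by rewrite -!exprM mulnC.
case: (unit_sq uA uAu) => sA; case: (unit_sq e eu) => se.
- exists uA, uB, (e ^+ 3), (uA * A), (uB * B); split; first by split=> //; left.
  split=> //; last by split; [apply: cop | apply: mulg_neq0 => //; apply: mulg_neq0].
  by rewrite !exprMn hB2 hBA sA ?e6 se; ring.
- exists uA, uB, (e ^+ 3), (uB * B), (uA * A); split; first by split=> //; right.
  split=> //; last by split; [apply: cop | apply: mulg_neq0 => //; apply: mulg_neq0].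
  by rewrite !exprMn hA2 hBA sA ?e6 se; ring.
- exists uA, uB, (e ^+ 3), (uB * B), (uA * A); split; first by split=> //; right.
  split=> //; last by split; [apply: cop | apply: mulg_neq0 => //; apply: mulg_neq0].
  by rewrite !exprMn hA2 hBA sA ?e6 se; ring.
- exists uA, uB, (e ^+ 3), (uA * A), (uB * B); split; first by split=> //; left.
  split=> //; last by split; [apply: cop | apply: mulg_neq0 => //; apply: mulg_neq0].
  by rewrite !exprMn hB2 hBA sA ?e6 se; ring.
Qed.

Lemma coprime_sym a b : gcoprime a b -> gcoprime b a.
Proof. by move=> h d d1 d2; apply: h. Qed.

Lemma coprime_third (a b c : gauss) : a != 0 -> a ^+ 2 + b ^+ 2 + c ^+ 2 = 0 ->
  gcoprime a b -> gcoprime a c.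
Proof.
move=> a0 h hab d da dc.
case: (boolP (gunit d)) => // du; exfalso.
have d0 := dvd_neq0 d a a0 da.
have [p [z [pi ez]]] := irred_factor d d0 du.
have pd : gdvd p d by exists z; rewrite ez mulrC.
have pa := dvd_trans _ _ _ pd da.
have pc := dvd_trans _ _ _ pd dc.
have pb2 : gdvd p (b * b).
  have -> : b * b = - (a * a) - c * c.
    by apply/eqP; rewrite -subr_eq0 -h; apply/eqP; ring.
  by apply: dvd_add; apply: dvd_opp; apply: dvd_mulr.
have [_ [_ pp]] := irred_prime p pi.
have pb : gdvd p b by case: (pp _ _ pb2).
case: pi => _ [pu _].
by move: pu; rewrite (hab p pa pb).
Qed.

Lemma par_sq x : gdvd (1 + gi) (x ^+ 2 - x).
Proof.
case: (boolP (godd x)) => ho.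
  have -> : x ^+ 2 - x = x * (x - 1) by ring.
  apply: dvd_mull; apply: even_dvd; move: ho; rewrite /godd ReB ImB Re1 Im1; lia.
have -> : x ^+ 2 - x = (x - 1) * x by ring.
by apply: dvd_mull; apply: nodd_dvd.
Qed.

Lemma par_sum (a b c : gauss) : a ^+ 2 + b ^+ 2 + c ^+ 2 = 0 ->
  ((Re a + Im a + Re b + Im b + Re c + Im c) %% 2 = 0)%Z.
Proof.
move=> h.
have : gdvd (1 + gi) (a + b + c).
  have -> : a + b + c = - ((a ^+ 2 - a) + (b ^+ 2 - b) + (c ^+ 2 - c)) + (a ^+ 2 + b ^+ 2 + c ^+ 2) by ring.
  rewrite h addr0; apply: dvd_opp; apply: dvd_add; [apply: dvd_add|]; apply: par_sq.
move/dvd_even; rewrite !ReD !ImD; lia.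
Qed.

Lemma perm_test (a b c : gauss) : perm_eq [:: a; b; c] [:: b; c; a].
Proof. by apply/permP => p /=; lia. Qed.

Lemma perm3 (a b c : gauss) l :
  l \in [:: [:: a; b; c]; [:: a; c; b]; [:: b; a; c]; [:: b; c; a]; [:: c; a; b]; [:: c; b; a]] ->
  perm_eq l [:: a; b; c].
Proof.
rewrite !inE => /or3P [/eqP ->|/eqP ->|/or3P [/eqP ->|/eqP ->|/orP [/eqP ->|/eqP ->]]];
  by apply/permP => p /=; lia.
Qed.

Theorem theorem4p3 :
  (forall alpha beta gamma : gauss,
     alpha ^+ 2 + beta ^+ 2 + gamma ^+ 2 = 0 ->
     alpha * beta * gamma != 0 ->
     gcoprime alpha beta ->
     exists (u v w : gauss) (X Y Z : gauss),
       [/\ gunit u, gunit v, gunit w &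
           perm_eq [:: X; Y; Z] [:: u * alpha; v * beta; w * gamma]] /\
       [/\ X ^+ 2 + Y ^+ 2 = Z ^+ 2, goddI X, goddI Z,
           (exists (a1 : nat) (s : seq (gauss * nat)),
              [/\ uniq (map fst s),
                  (forall pa, pa \in s -> gprime pa.1 /\ goddI pa.1) &
                  Y = (1 + gi) ^+ (2 + a1) * \prod_(pa <- s) pa.1 ^+ pa.2]) &
           gcoprime X Y /\ X * Y * Z != 0]) /\
  (forall X Y Z : gauss,
     X ^+ 2 + Y ^+ 2 = Z ^+ 2 -> gcoprime X Y -> X * Y * Z != 0 ->
     [/\ X ^+ 2 + Y ^+ 2 + (gi * Z) ^+ 2 = 0, gcoprime X Y &
         X * Y * (gi * Z) != 0]).
Proof.
split; last first.
  move=> X Y Z h cXY nz; split=> //.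
    by rewrite exprMn h (_ : gi ^+ 2 = -1) //; ring.
  have -> : X * Y * (gi * Z) = gi * (X * Y * Z) by ring.
  by apply: mulg_neq0.
move=> a b c h nz cab.
have a0 : a != 0 by apply/eqP => e; rewrite e !mul0r eqxx in nz.
have b0 : b != 0 by apply/eqP => e; rewrite e mulr0 mul0r eqxx in nz.
have c0 : c != 0 by apply/eqP => e; rewrite e mulr0 eqxx in nz.
have cac := coprime_third a b c a0 h cab.
have hb : b ^+ 2 + a ^+ 2 + c ^+ 2 = 0 by rewrite -h; ring.
have cbc := coprime_third b a c b0 hb (coprime_sym _ _ cab).
have hp := par_sum a b c h.
case: (boolP (godd a)) => oa; case: (boolP (godd b)) => ob.
- have oc : ~~ godd c by move: hp oa ob; rewrite /godd; lia.
  have [uA [uB [uE [X [Z [[uAu uBu uEu o] rest]]]]]] := core a b c h oa ob oc c0 cac cbc.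
  exists uA, uB, uE, X, (uE * c), Z; split=> //; split=> //.
  by case: o => [[-> ->]|[-> ->]]; apply: perm3; rewrite !inE eqxx ?orbT.
- have oc : godd c by move: hp oa ob; rewrite /godd; lia.
  have h' : a ^+ 2 + c ^+ 2 + b ^+ 2 = 0 by rewrite -h; ring.
  have [uA [uB [uE [X [Z [[uAu uBu uEu o] rest]]]]]] :=
    core a c b h' oa oc ob b0 cab (coprime_sym _ _ cbc).
  exists uA, uE, uB, X, (uE * b), Z; split=> //; split=> //.
  by case: o => [[-> ->]|[-> ->]]; apply: perm3; rewrite !inE eqxx ?orbT.
- have oc : godd c by move: hp oa ob; rewrite /godd; lia.
  have h' : b ^+ 2 + c ^+ 2 + a ^+ 2 = 0 by rewrite -h; ring.
  have [uA [uB [uE [X [Z [[uAu uBu uEu o] rest]]]]]] :=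
    core b c a h' ob oc oa a0 (coprime_sym _ _ cab) (coprime_sym _ _ cac).
  exists uE, uA, uB, X, (uE * a), Z; split=> //; split=> //.
  by case: o => [[-> ->]|[-> ->]]; apply: perm3; rewrite !inE eqxx ?orbT.
- exfalso.
  have := cab (1 + gi) (nodd_dvd a oa) (nodd_dvd b ob).
  by [].
Qed.
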